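(* Let $n,m$ be positive integers and let $(\mathbf{x}_i,\mathbf{y}_i)_{i=1}^m$ be i.i.d. samples from a zero-mean jointly Gaussian distribution on $\mathbb{R}^n\times\mathbb{R}^n$ with $\mathbb{E}[\mathbf{x}\mathbf{x}^\top]=\mathbb{E}[\mathbf{y}\mathbf{y}^\top]=\mathbf{I}_n$ and $\boldsymbol{\Sigma}_{xy}=\mathbb{E}[\mathbf{x}\mathbf{y}^\top]=\rho\mathbf{u}\mathbf{v}^\top$, where $\rho\in(0,1)$, $\|\mathbf{u}\|_2=\|\mathbf{v}\|_2=1$, $\|\mathbf{u}\|_0\le k_{\mathbf{u}}$, $\|\mathbf{v}\|_0\le k_{\mathbf{v}}$. Condition on the event $\mathcal{E}$ (defined in the context). Let $k_{\max}=\max(k_{\mathbf{u}},k_{\mathbf{v}})$ and, for each $t$, let $t_{\mathbf{u}}=\min(t,k_{\mathbf{u}})$, $t_{\mathbf{v}}=\min(t,k_{\mathbf{v}})$. Let $\gamma\in(0,1)$. There is an absolute constant $C>0$ such that, with $C_1=C\frac{(1+\rho)^2}{\rho^2\gamma^2(1-\sqrt{\gamma})^2}$ and $C_2=C\frac{1+\rho}{\rho\gamma}$, if $$m\ \ge\ C_1\max_{1\le t\le k_{\max}}(t_{\mathbf{u}}+t_{\mathbf{v}})\,s_{\mathbf{u}}(t_{\mathbf{u}})\,s_{\mathbf{v}}(t_{\mathbf{v}})\log n,$$ then the outputs $\hat{\mathbf{u}}^{(k_{\max})},\hat{\mathbf{v}}^{(k_{\max})}$ of the Bi-SEP algorithm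 satisfy $$\sin\angle(\hat{\mathbf{u}}^{(k_{\max})},\mathbf{u})\le\sqrt{1-\gamma}+C_2\sqrt{\frac{(k_{\mathbf{u}}+k_{\mathbf{v}})\log n}{m}},\qquad \sin\angle(\hat{\mathbf{v}}^{(k_{\max})},\mathbf{v})\le\sqrt{1-\gamma}+C_2\sqrt{\frac{(k_{\mathbf{u}}+k_{\mathbf{v}})\log n}{m}}.$$
   Context: Sample cross-covariance: $\widehat{\boldsymbol{\Sigma}}_{xy}=\frac1m\sum_{i=1}^m\mathbf{x}_i\mathbf{y}_i^\top$; noise matrix $\mathbf{W}=\widehat{\boldsymbol{\Sigma}}_{xy}-\rho\mathbf{u}\mathbf{v}^\top$. For $S_1,S_2\subset[n]$, $\mathbf{W}_{S_1,S_2}$ is the submatrix with rows $S_1$, columns $S_2$; $\|\cdot\|_2$ is the spectral norm. The event $\mathcal{E}$ is: for all $S_1,S_2\subset[n]$ with $|S_1|\le k_{\mathbf{u}}$, $|S_2|\le k_{\mathbf{v}}$, $\|\mathbf{W}_{S_1,S_2}\|_2\le C\sqrt{((|S_1|+|S_2|)\log n+c'\log n)/m}$, for fixed absolute constants $C,c'>0$. Structure functions: with $u_{(i)}$ the $i$-th largest entry of $\mathbf{u}$ in absolute value, $s_{\mathbf{u}}(p)=(\sum_{i=1}^p u_{(i)}^2)^{-1}$ and similarly $s_{\mathbf{v}}(q)=(\sum_{j=1}^q v_{(j)}^2)^{-1}$, for $p,q\in[n]$. $\sin\angle(\mathbf{a},\mathbf{b})=\sqrt{1-\langle\mathbf{a},\mathbf{b}\rangle^2}$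 for unit vectors. Bi-SEP algorithm (input $\widehat{\boldsymbol{\Sigma}}_{xy},k_{\mathbf{u}},k_{\mathbf{v}}$): pick $(i_0,j_0)=\arg\max_{i,j}|(\widehat{\boldsymbol{\Sigma}}_{xy})_{ij}|$, set $S_{\mathbf{u}}^{(0)}=\{i_0\}$, $S_{\mathbf{v}}^{(0)}=\{j_0\}$. For $t=0,\dots,k_{\max}-1$: let $(\hat{\mathbf{u}}^{(t)},\hat{\mathbf{v}}^{(t)})$ be the unit-norm leading left/right singular vectors of the submatrix $(\widehat{\boldsymbol{\Sigma}}_{xy})_{S_{\mathbf{u}}^{(t)},S_{\mathbf{v}}^{(t)}}$, zero-padded to $\mathbb{R}^n$; set $\mathbf{r}_{\mathbf{u}}=\widehat{\boldsymbol{\Sigma}}_{xy}\hat{\mathbf{v}}^{(t)}$, $\mathbf{r}_{\mathbf{v}}=\widehat{\boldsymbol{\Sigma}}_{xy}^\top\hat{\mathbf{u}}^{(t)}$; let $S_{\mathbf{u}}^{(t+1)}$ be the indices of the $\min(t+1,k_{\mathbf{u}})$ largest entries of $|\mathbf{r}_{\mathbf{u}}|$ and $S_{\mathbf{v}}^{(t+1)}$ the indices of the $\min(t+1,k_{\mathbf{v}})$ largest entries of $|\mathbf{r}_{\mathbf{v}}|$. Output: the unit-norm leading singular pair $(\hat{\mathbf{u}}^{(k_{\max})},\hat{\mathbf{v}}^{(k_{\max})})$ of $(\widehat{\boldsymbol{\Sigma}}_{xy})_{S_{\mathbf{u}}^{(k_{\max})},S_{\mathbf{v}}^{(k_{\max})}}$,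 zero-padded to $\mathbb{R}^n$. *)

(* Defs.v *)
From HB Require Import structures.
From mathcomp Require Import all_boot all_order all_algebra.
From mathcomp Require Import boolp classical_sets reals exp.
Set Implicit Arguments. Unset Strict Implicit. Unset Printing Implicit Defensive.
Import Order.TTheory GRing.Theory Num.Theory.
Local Open Scope ring_scope.

Section BiSEP.
Variable R : realType.
Variable n : nat.

Definition dotv (a b : 'cV[R]_n) : R := \sum_(i < n) a i 0 * b i 0.
Definition norm2 (a : 'cV[R]_n) : R := Num.sqrt (dotv a a).

(* sin of the angle between unit vectors: sqrt(1 - <a,b>^2) *)
Definition sin_angle (a b : 'cV[R]_n) : R := Num.sqrt (1 - (dotv a b) ^+ 2).

Definition specnorm (A : 'M[R]_n) : R :=
  reals.sup [set r : R | exists b : 'cV[R]_n, norm2 b <= 1 /\ r = norm2 (A *m b)]%classic.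

(* the submatrix A_{S1,S2}, represented as the n x n matrix that agrees with A
   on S1 x S2 and is zero elsewhere (same spectral norm, same singular pairs
   once zero-padded) *)
Definition restr (S1 S2 : {set 'I_n}) (A : 'M[R]_n) : 'M[R]_n :=
  \matrix_(i, j) (if (i \in S1) && (j \in S2) then A i j else 0).

Definition supp (a : 'cV[R]_n) : {set 'I_n} := [set i | a i 0 != 0].

Definition l0 (a : 'cV[R]_n) : nat := #|supp a|.

(* (a, b) is a unit-norm leading left/right singular pair of A_{S1,S2},
   zero-padded to R^n *)
Definition leading_pair (A : 'M[R]_n) (S1 S2 : {set 'I_n}) (a b : 'cV[R]_n) : Prop :=
  let B := restr S1 S2 A in
  [/\ norm2 a = 1, norm2 b = 1, supp a \subset S1 & supp b \subset S2] /\
  (B *m b = specnorm B *: a /\ B^T *m a = specnorm B *: b).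

(* S is the set of indices of the k largest entries of |r| (ties broken
   arbitrarily; if k > n, all indices) *)
Definition top_idx (r : 'cV[R]_n) (k : nat) (S : {set 'I_n}) : Prop :=
  #|S| = minn k n /\
  (forall i j, i \in S -> j \notin S -> `|r j 0| <= `|r i 0|).

Definition sfun (a : 'cV[R]_n) (p : nat) : R :=
  (\sum_(x <- take p (sort (fun x y : R => y <= x)
                        [seq (a i 0) ^+ 2 | i <- enum 'I_n])) x)^-1.

Definition sample_cov (m : nat) (x y : 'I_m -> 'cV[R]_n) : 'M[R]_n :=
  (m%:R)^-1 *: \sum_(i < m) (x i *m (y i)^T).

Definition event_E (CE c' : R) (m ku kv : nat) (W : 'M[R]_n) : Prop :=
  forall S1 S2 : {set 'I_n}, (#|S1| <= ku)%N -> (#|S2| <= kv)%N ->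
    specnorm (restr S1 S2 W) <=
      CE * Num.sqrt (((#|S1| + #|S2|)%:R * ln n%:R + c' * ln n%:R) / m%:R).

(* an execution trace of Bi-SEP on input (Sig, ku, kv): index sets Su t, Sv t
   and singular pairs (uh t, vh t) for t = 0..kmax *)
Definition bisep_run (Sig : 'M[R]_n) (ku kv : nat)
    (Su Sv : nat -> {set 'I_n}) (uh vh : nat -> 'cV[R]_n) : Prop :=
  let kmax := maxn ku kv in
  [/\ (exists i0 j0 : 'I_n,
        (forall i j, `|Sig i j| <= `|Sig i0 j0|) /\
        Su 0%N = [set i0] /\ Sv 0%N = [set j0]),
      forall t, (t < kmax)%N ->
        [/\ leading_pair Sig (Su t) (Sv t) (uh t) (vh t),
            top_idx (Sig *m vh t) (minn t.+1 ku) (Su t.+1) &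
            top_idx (Sig^T *m uh t) (minn t.+1 kv) (Sv t.+1)]
    & leading_pair Sig (Su kmax) (Sv kmax) (uh kmax) (vh kmax)].

End BiSEP.

(* Main.v *)
Require Import Defs.
From HB Require Import structures.
From mathcomp Require Import all_boot all_order all_algebra.
From mathcomp Require Import boolp classical_sets reals exp.
From mathcomp Require Import ring lra zify.
Import Order.TTheory GRing.Theory Num.Theory.
Local Open Scope ring_scope.
Set Implicit Arguments. Unset Strict Implicit.

Section Vec.
Variable R : realType.
Variable n : nat.
Implicit Types a b c w z : 'cV[R]_n.
Implicit Types S T : {set 'I_n}.

Lemma sq_le (x y : R) : 0 <= y -> x ^+ 2 <= y ^+ 2 -> x <= y.
Proof. move=> hy h; case: (lerP x y) => // hxy; nra. Qed.

Lemma dotvC a b : dotv a b = dotv b a.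
Proof. by rewrite /dotv; apply: eq_bigr => i _; rewrite mulrC. Qed.
Lemma dotvDl a b c : dotv (a + b) c = dotv a c + dotv b c.
Proof. rewrite /dotv -big_split; apply: eq_bigr => i _; by rewrite mxE mulrDl. Qed.
Lemma dotvZl k a b : dotv (k *: a) b = k * dotv a b.
Proof. rewrite /dotv mulr_sumr; apply: eq_bigr => i _; by rewrite mxE mulrA. Qed.
Lemma dotvDr a b c : dotv a (b + c) = dotv a b + dotv a c.
Proof. by rewrite dotvC dotvDl !(dotvC a). Qed.
Lemma dotvZr k a b : dotv a (k *: b) = k * dotv a b.
Proof. by rewrite dotvC dotvZl dotvC. Qed.
Lemma dotvNl a b : dotv (- a) b = - dotv a b.
Proof. by rewrite -scaleN1r dotvZl mulN1r. Qed.
Lemma dotvNr a b : dotv a (- b) = - dotv a b.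
Proof. by rewrite dotvC dotvNl dotvC. Qed.
Lemma dotv0l b : dotv 0 b = 0.
Proof. by rewrite /dotv big1 // => i _; rewrite mxE mul0r. Qed.
Lemma dotv_ge0 a : 0 <= dotv a a.
Proof. by rewrite /dotv; apply: sumr_ge0 => i _; rewrite -expr2 sqr_ge0. Qed.
Lemma norm2_ge0 a : 0 <= norm2 a.
Proof. exact: sqrtr_ge0. Qed.
Lemma norm2_sqr a : norm2 a ^+ 2 = dotv a a.
Proof. by rewrite /norm2 sqr_sqrtr // dotv_ge0. Qed.
Lemma norm2_0 : norm2 (0 : 'cV[R]_n) = 0.
Proof. by rewrite /norm2 dotv0l sqrtr0. Qed.

Lemma dotv_eq0 a : dotv a a = 0 -> a = 0.
Proof.
move=> h; apply/matrixP => i j; rewrite (ord1 j) [RHS]mxE.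
have h2 : a i 0 * a i 0 = 0.
  apply: (@psumr_eq0P R _ xpredT (fun i => a i 0 * a i 0) _ h i isT).
  by move=> k _; rewrite -expr2 sqr_ge0.
by move: h2 => /eqP; rewrite mulf_eq0 orbb => /eqP.
Qed.

Lemma CS2 a b : dotv a b ^+ 2 <= dotv a a * dotv b b.
Proof.
have [B0|Bp] := eqVneq (dotv b b) 0.
  by rewrite (dotv_eq0 B0) dotvC !dotv0l mulr0 expr0n.
have Bpos : 0 < dotv b b by rewrite lt_def Bp dotv_ge0.
set t := dotv a b / dotv b b.
have := dotv_ge0 (a - t *: b).
rewrite !(dotvDl, dotvDr, dotvNl, dotvNr, dotvZl, dotvZr) (dotvC b a).
rewrite /t => h.
set A := dotv a a in h *; set B := dotv b b in h Bpos Bp *; set D := dotv a b in h *.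
rewrite -subr_ge0.
have -> : A * B - D ^+ 2 = B * (A - D / B * D + (- (D / B * D) - D / B * - (D / B * B))).
  by field.
by apply: mulr_ge0 => //; apply: ltW.
Qed.

Lemma CS a b : `|dotv a b| <= norm2 a * norm2 b.
Proof.
apply: sq_le; first by apply: mulr_ge0; apply: norm2_ge0.
by rewrite exprMn !norm2_sqr real_normK ?num_real // CS2.
Qed.

Lemma norm2D a b : norm2 (a + b) <= norm2 a + norm2 b.
Proof.
apply: sq_le; first by apply: addr_ge0; apply: norm2_ge0.
rewrite norm2_sqr !(dotvDl, dotvDr) (dotvC b a) sqrrD !norm2_sqr.
have := CS a b; have := ler_norm (dotv a b); lra.
Qed.

Lemma norm2Z k a : norm2 (k *: a) = `|k| * norm2 a.
Proof.
rewrite /norm2 dotvZl dotvZr mulrA -expr2 sqrtrM ?sqr_ge0 //.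
by rewrite sqrtr_sqr.
Qed.

Lemma norm2N a : norm2 (- a) = norm2 a.
Proof. by rewrite -scaleN1r norm2Z normrN1 mul1r. Qed.

Lemma norm2B a b : norm2 (a - b) <= norm2 a + norm2 b.
Proof. by rewrite -(norm2N b) norm2D. Qed.

Lemma norm_le_sum w : norm2 w <= \sum_i `|w i 0|.
Proof.
apply: sq_le; first by apply: sumr_ge0 => i _.
rewrite norm2_sqr /dotv expr2 mulr_suml; apply: ler_sum => i _.
apply: le_trans (ler_norm _) _; rewrite normrM; apply: ler_pM => //.
by rewrite (bigD1 i) //= lerDl sumr_ge0.
Qed.

Lemma entry_le1 b i : norm2 b <= 1 -> `|b i 0| <= 1.
Proof.
move=> hb; apply: sq_le => //; rewrite real_normK ?num_real // expr1n.
have : dotv b b <= 1.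
  by rewrite -norm2_sqr; have := norm2_ge0 b; nra.
move/(le_trans _); apply; rewrite /dotv (bigD1 i) //= expr2 lerDl.
by apply: sumr_ge0 => k _; rewrite -expr2 sqr_ge0.
Qed.

Lemma spec_ub (M : 'M[R]_n) b : norm2 b <= 1 -> norm2 (M *m b) <= specnorm M.
Proof.
move=> hb; apply: ub_le_sup; last by exists b.
exists (\sum_i \sum_j `|M i j|) => r [b' [hb' ->]].
apply: le_trans (norm_le_sum _) _; apply: ler_sum => i _.
rewrite mxE; apply: le_trans (ler_norm_sum _ _ _) _; apply: ler_sum => j _.
rewrite normrM; rewrite -[X in _ <= X]mulr1; apply: ler_pM => //.
exact: entry_le1.
Qed.

Lemma specnorm_ge0 (M : 'M[R]_n) : 0 <= specnorm M.
Proof.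
have := @spec_ub M 0; rewrite mulmx0.
have -> : norm2 (0 : 'cV[R]_n) = 0 := norm2_0.
by apply.
Qed.

Lemma norm_le_dot w K : (forall z, norm2 z <= 1 -> dotv z w <= K) -> norm2 w <= K.
Proof.
move=> h; have [N0|Np] := eqVneq (norm2 w) 0.
  by rewrite N0; have := h 0; rewrite dotv0l norm2_0; apply.
have Npos : 0 < norm2 w by rewrite lt_def Np norm2_ge0.
have := h ((norm2 w)^-1 *: w); rewrite dotvZl -norm2_sqr norm2Z.
rewrite ger0_norm ?invr_ge0 ?norm2_ge0 // mulVf // => /(_ (le_refl _)).
by rewrite expr2 mulrA mulVf // mul1r.
Qed.

Definition mask (S : {set 'I_n}) a : 'cV[R]_n := \col_i (if i \in S then a i 0 else 0).
Definition form (M : 'M[R]_n) a b := dotv a (M *m b).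

Lemma dotv_maskl S a b : dotv (mask S a) b = \sum_(i in S) a i 0 * b i 0.
Proof.
rewrite /dotv [RHS]big_mkcond /=; apply: eq_bigr => i _; rewrite mxE.
by case: (i \in S); rewrite ?mul0r.
Qed.

Lemma dotv_maskC S a b : dotv (mask S a) b = dotv a (mask S b).
Proof. by rewrite dotv_maskl dotvC dotv_maskl; apply: eq_bigr => i _; rewrite mulrC. Qed.

Lemma mask_mask S a : mask S (mask S a) = mask S a.
Proof. by apply/matrixP => i j; rewrite !mxE; case: (i \in S). Qed.

Lemma mask_id S a : supp a \subset S -> mask S a = a.
Proof.
move=> /fintype.subsetP h; apply/matrixP => i j; rewrite (ord1 j) mxE.
case: ifP => // hi; have : i \notin supp a by apply/negP => /h; rewrite hi.
by rewrite inE negbK => /eqP.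
Qed.

Lemma maskD S a b : mask S (a + b) = mask S a + mask S b.
Proof. by apply/matrixP => i j; rewrite !mxE; case: (i \in S); rewrite ?addr0. Qed.

Lemma maskZ S k a : mask S (k *: a) = k *: mask S a.
Proof. by apply/matrixP => i j; rewrite !mxE; case: (i \in S); rewrite ?mulr0. Qed.

Lemma mask0 S : mask S 0 = 0.
Proof. by apply/matrixP => i j; rewrite !mxE; case: (i \in S). Qed.

Lemma norm2_mask_sqr S a : norm2 (mask S a) ^+ 2 = \sum_(i in S) a i 0 ^+ 2.
Proof.
rewrite norm2_sqr dotv_maskC mask_mask dotvC dotv_maskl.
by apply: eq_bigr => i _; rewrite expr2.
Qed.

Lemma dotv_mask_self S a : dotv (mask S a) a = norm2 (mask S a) ^+ 2.
Proof. by rewrite norm2_sqr dotv_maskC [RHS]dotv_maskC mask_mask. Qed.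

Lemma norm2_mask_le S a : norm2 (mask S a) <= norm2 a.
Proof.
rewrite /norm2 ler_sqrt ?dotv_ge0 //; apply: ler_sum => i _; rewrite mxE.
by case: (i \in S); rewrite // mul0r -expr2 sqr_ge0.
Qed.

Lemma norm2_mask1 i a : norm2 (mask [set i] a) = `|a i 0|.
Proof.
by rewrite -[LHS](ger0_norm (norm2_ge0 _)) -sqrtr_sqr norm2_mask_sqr big_set1 sqrtr_sqr.
Qed.

Lemma restr_mul S1 S2 (M : 'M[R]_n) b : restr S1 S2 M *m b = mask S1 (M *m mask S2 b).
Proof.
rewrite /restr; apply/matrixP => i j; rewrite (ord1 j) !mxE; case: ifP => hi.
  by apply: eq_bigr => k _; rewrite !mxE hi /=; case: ifP; rewrite ?mulr0 ?mul0r.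
under eq_bigr => k _ do rewrite !mxE hi /= mul0r.
by rewrite big1_eq.
Qed.

Lemma form_restr S1 S2 M a b : form (restr S1 S2 M) a b = form M (mask S1 a) (mask S2 b).
Proof. by rewrite /form restr_mul -dotv_maskC. Qed.

Lemma form_tr M a b : form M^T a b = form M b a.
Proof.
rewrite /form /dotv; under eq_bigr => i _ do rewrite mxE mulr_sumr.
rewrite exchange_big /=; apply: eq_bigr => j _; rewrite mxE mulr_sumr.
by apply: eq_bigr => i _; rewrite mxE; ring.
Qed.

Lemma formD M N a b : form (M + N) a b = form M a b + form N a b.
Proof. by rewrite /form mulmxDl dotvDr. Qed.

Lemma formZ k M a b : form (k *: M) a b = k * form M a b.
Proof. by rewrite /form -scalemxAl dotvZr. Qed.

Lemma outer_mul (u v b : 'cV[R]_n) : (u *m v^T) *m b = dotv v b *: u.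
Proof.
apply/matrixP => i j; rewrite (ord1 j) !mxE /dotv mulr_suml; apply: eq_bigr => k _.
by rewrite !mxE big_ord1 !mxE; ring.
Qed.

Lemma form_outer (u v a b : 'cV[R]_n) : form (u *m v^T) a b = dotv a u * dotv v b.
Proof. by rewrite /form outer_mul dotvZr mulrC. Qed.

Lemma form_le_spec M a b : norm2 a <= 1 -> norm2 b <= 1 -> `|form M a b| <= specnorm M.
Proof.
move=> ha hb; apply: le_trans (CS _ _) _; rewrite -[X in _ <= X]mul1r.
apply: ler_pM; rewrite ?norm2_ge0 //; exact: spec_ub.
Qed.

Lemma top_sum (r : 'cV[R]_n) k S T : top_idx r k S -> (#|T| <= #|S|)%N ->
  \sum_(i in T) r i 0 ^+ 2 <= \sum_(i in S) r i 0 ^+ 2.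
Proof.
move=> [_ htop] hc.
rewrite (big_setID S) [X in _ <= X](big_setID T) /= finset.setIC.
apply: lerD => //.
have hf : forall j i, j \in T :\: S -> i \in S :\: T -> r j 0 ^+ 2 <= r i 0 ^+ 2.
  move=> j i; rewrite !inE => /andP[hjS _] /andP[_ hiS].
  have := htop i j hiS hjS.
  rewrite -(real_normK (num_real (r j 0))) -(real_normK (num_real (r i 0))).
  have := normr_ge0 (r j 0); nra.
have hqp : (#|T :\: S| <= #|S :\: T|)%N.
  have := cardsID S T; have := cardsID T S; rewrite finset.setIC; lia.
have key : (\sum_(i in T :\: S) r i 0 ^+ 2) *+ #|S :\: T| <=
           (\sum_(i in S :\: T) r i 0 ^+ 2) *+ #|T :\: S|.
  rewrite -sumr_const -sumrMnl; apply: ler_sum => i hi.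
  rewrite -sumr_const; apply: ler_sum => j hj; exact: hf.
have B0 : 0 <= \sum_(i in S :\: T) r i 0 ^+ 2 by apply: sumr_ge0 => i _; rewrite sqr_ge0.
have [p0|pp] := eqVneq #|S :\: T| 0%N.
  have : #|T :\: S| = 0%N by move: hqp; rewrite p0; lia.
  by move/cards0_eq => ->; rewrite big_set0.
have key2 := le_trans key (ler_wpMn2l B0 hqp).
by move: key2; rewrite lerMn2r (negbTE pp).
Qed.

Definition srt a := sort (relpre (fun i : 'I_n => a i 0 ^+ 2) (fun x y : R => y <= x)) (enum 'I_n).
Definition topset a p : {set 'I_n} := [set i in take p (srt a)].

Lemma uniq_srt a : uniq (srt a).
Proof. by rewrite sort_uniq enum_uniq. Qed.
Lemma size_srt a : size (srt a) = n.
Proof. by rewrite size_sort size_enum_ord. Qed.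

Lemma card_topset a p : #|topset a p| = minn p n.
Proof.
rewrite /topset cardsE (card_uniqP (take_uniq p (uniq_srt a))).
by rewrite size_take_min size_srt.
Qed.

Lemma sfunE a p : sfun a p = (\sum_(i in topset a p) a i 0 ^+ 2)^-1.
Proof.
rewrite /sfun sort_map -map_take big_map big_uniq ?take_uniq ?uniq_srt //.
by congr (_^-1); apply: eq_bigl => i; rewrite inE.
Qed.

Lemma topset_sub a p q : (p <= q)%N -> topset a p \subset topset a q.
Proof.
move=> hpq; apply/fintype.subsetP => i; rewrite !inE -(take_takel _ hpq).
exact: mem_take.
Qed.

Lemma topset_max a p j : (0 < p)%N -> a j 0 ^+ 2 <= \sum_(i in topset a p) a i 0 ^+ 2.
Proof.
move=> hp.
have hsort : sorted (relpre (fun i : 'I_n => a i 0 ^+ 2) (fun x y : R => y <= x)) (srt a).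
  by apply: sort_sorted => x y /=; apply: le_total.
have hj : j \in srt a by rewrite mem_sort mem_enum.
have htr : transitive (relpre (fun i : 'I_n => a i 0 ^+ 2) (fun x y : R => y <= x)).
  by move=> x y z /= h1 h2; apply: le_trans h2 h1.
move: hsort hj; rewrite /topset; case: (srt a) => [|h s'] //= hpath hj.
have hall := order_path_min htr hpath.
have hh : h \in [set i in take p (h :: s')] by case: p hp => // p _; rewrite inE /= mem_head.
have hjh : a j 0 ^+ 2 <= a h 0 ^+ 2.
  move: hj; rewrite in_cons => /orP[/eqP -> //|hj].
  by have := allP hall j hj.
apply: le_trans hjh _; rewrite (bigD1 h) //= lerDl.
by apply: sumr_ge0 => i _; rewrite sqr_ge0.
Qed.

Definition noise (N : 'M[R]_n) S1 S2 e := forall z w, norm2 z <= 1 -> norm2 w <= 1 ->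
  `|form N (mask S1 z) (mask S2 w)| <= e.

Lemma noise_ge0 N S1 S2 e : noise N S1 S2 e -> 0 <= e.
Proof.
move=> h; apply: le_trans (h 0 0 _ _); rewrite ?norm2_0 //.
Qed.

Lemma noise_spec N S1 S2 e : specnorm (restr S1 S2 N) <= e -> noise N S1 S2 e.
Proof.
by move=> h z w hz hw; rewrite -form_restr; apply: le_trans h; apply: form_le_spec.
Qed.

Lemma noise_tr N S1 S2 e : noise N S1 S2 e -> noise N^T S2 S1 e.
Proof. by move=> h z w hz hw; rewrite form_tr; apply: h. Qed.

Lemma noise_vec N S S2 e b : noise N S S2 e -> norm2 b <= 1 -> mask S2 b = b ->
  norm2 (mask S (N *m b)) <= e.
Proof.
move=> h hb hmb; apply: norm_le_dot => z hz.
rewrite dotvC dotv_maskC dotvC -hmb; apply: le_trans (ler_norm _) _.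
exact: h.
Qed.

Lemma pair_bound (N : 'M[R]_n) rho (u v a b : 'cV[R]_n) S1 S2 e :
  0 < rho -> norm2 a = 1 -> norm2 b = 1 -> mask S1 a = a -> mask S2 b = b ->
  (forall z w, norm2 z <= 1 -> norm2 w <= 1 ->
     form (N + rho *: (u *m v^T)) (mask S1 z) (mask S2 w) <=
     form (N + rho *: (u *m v^T)) a b) ->
  noise N S1 S2 e ->
  rho * (norm2 (mask S1 u) * norm2 (mask S2 v)) - 2 * e <=
  rho * (`|dotv a u| * `|dotv v b|).
Proof.
move=> hr ha hb hma hmb hlead hN.
have e0 := noise_ge0 hN.
have hrr : 0 <= rho * (`|dotv a u| * `|dotv v b|) by apply: mulr_ge0; [exact: ltW | apply: mulr_ge0].
have upper : form (N + rho *: (u *m v^T)) a b <= e + rho * (`|dotv a u| * `|dotv v b|).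
  rewrite formD formZ form_outer.
  have : `|form N a b| <= e by rewrite -hma -hmb; apply: hN; rewrite ?ha ?hb.
  have : rho * (dotv a u * dotv v b) <= rho * (`|dotv a u| * `|dotv v b|).
    by rewrite -normrM; apply: ler_wpM2l; [exact: ltW | exact: ler_norm].
  have := ler_norm (form N a b); lra.
set x := norm2 (mask S1 u); set y := norm2 (mask S2 v).
have x0 : 0 <= x by apply: norm2_ge0.
have y0 : 0 <= y by apply: norm2_ge0.
have [xz|xp] := eqVneq x 0.
  by rewrite xz mul0r mulr0 sub0r; apply: le_trans hrr; rewrite oppr_le0 mulr_ge0.
have [yz|yp] := eqVneq y 0.
  by rewrite yz mulr0 mulr0 sub0r; apply: le_trans hrr; rewrite oppr_le0 mulr_ge0.
have xpos : 0 < x by rewrite lt_def xp.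
have ypos : 0 < y by rewrite lt_def yp.
set z := x^-1 *: mask S1 u; set w := y^-1 *: mask S2 v.
have nz : norm2 z = 1 by rewrite norm2Z ger0_norm ?invr_ge0 // mulVf.
have nw : norm2 w = 1 by rewrite norm2Z ger0_norm ?invr_ge0 // mulVf.
have mz : mask S1 z = z by rewrite maskZ mask_mask.
have mw : mask S2 w = w by rewrite maskZ mask_mask.
have lower : rho * (x * y) - e <= form (N + rho *: (u *m v^T)) z w.
  rewrite formD formZ form_outer.
  have dz : dotv z u = x by rewrite dotvZl dotv_mask_self expr2 mulrA mulVf ?mul1r.
  have dw : dotv v w = y by rewrite dotvC dotvZl dotv_mask_self expr2 mulrA mulVf ?mul1r.
  have : `|form N z w| <= e by rewrite -mz -mw; apply: hN; rewrite ?nz ?nw.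
  rewrite dz dw ler_norml => /andP[h1 _]; lra.
have hz1 : norm2 z <= 1 by rewrite nz.
have hw1 : norm2 w <= 1 by rewrite nw.
have := hlead z w hz1 hw1; rewrite mz mw.
lra.
Qed.

Lemma select_bound (N : 'M[R]_n) rho (u v b : 'cV[R]_n) S2 S T k e :
  0 < rho -> norm2 b = 1 -> mask S2 b = b ->
  top_idx ((N + rho *: (u *m v^T)) *m b) k S -> (#|T| <= #|S|)%N ->
  noise N S S2 e -> noise N T S2 e ->
  rho * `|dotv v b| * norm2 (mask T u) - 2 * e <=
  rho * `|dotv v b| * norm2 (mask S u).
Proof.
move=> hr hb hmb htop hc hNS hNT.
have rE : (N + rho *: (u *m v^T)) *m b = N *m b + (rho * dotv v b) *: u.
  by rewrite mulmxDl -scalemxAl outer_mul scalerA.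
have hle : norm2 (mask T ((N + rho *: (u *m v^T)) *m b)) <=
           norm2 (mask S ((N + rho *: (u *m v^T)) *m b)).
  apply: sq_le; first exact: norm2_ge0.
  rewrite !norm2_mask_sqr; exact: top_sum htop hc.
have hb1 : norm2 b <= 1 by rewrite hb.
have eS := noise_vec hNS hb1 hmb.
have eT := noise_vec hNT hb1 hmb.
have c_abs : `|rho * dotv v b| = rho * `|dotv v b| by rewrite normrM gtr0_norm.
have h1 : norm2 (mask S ((N + rho *: (u *m v^T)) *m b)) <=
          e + rho * `|dotv v b| * norm2 (mask S u).
  rewrite rE maskD maskZ; apply: le_trans (norm2D _ _) _; rewrite norm2Z c_abs.
  by apply: lerD.
have h2 : rho * `|dotv v b| * norm2 (mask T u) <=
          norm2 (mask T ((N + rho *: (u *m v^T)) *m b)) + e.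
  have -> : rho * `|dotv v b| * norm2 (mask T u) =
     norm2 (mask T ((N + rho *: (u *m v^T)) *m b) - mask T (N *m b)).
    by rewrite rE maskD maskZ [_ - _]addrC addKr norm2Z c_abs.
  by apply: le_trans (norm2B _ _) _; apply: lerD.
lra.
Qed.

Lemma norm2_mask_sub S T a : S \subset T -> norm2 (mask S a) <= norm2 (mask T a).
Proof.
move=> /fintype.subsetP hST; rewrite /norm2 ler_sqrt ?dotv_ge0 //.
apply: ler_sum => i _; rewrite !mxE.
case: ifP => hi; first by rewrite (hST _ hi).
by rewrite mul0r -expr2 sqr_ge0.
Qed.

Lemma pos_of_sq a K : norm2 a = 1 -> (forall j, a j 0 ^+ 2 <= K) -> 0 < K.
Proof.
move=> ha hK; rewrite ltNge; apply/negP => hK0.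
have : dotv a a = 0.
  rewrite /dotv big1 // => j _; apply/eqP; rewrite -expr2 -sqrf_eq0.
  rewrite sqrf_eq0; apply/eqP; apply: le_anti; rewrite sqr_ge0 andbT.
  exact: le_trans (hK j) hK0.
by move=> h; move: ha; rewrite /norm2 h sqrtr0 => /eqP; rewrite eq_sym oner_eq0.
Qed.

Lemma dot_mask_le S a u : mask S a = a -> norm2 a = 1 -> `|dotv a u| <= norm2 (mask S u).
Proof.
move=> hm ha; rewrite -hm dotv_maskC; apply: le_trans (CS _ _) _.
by rewrite ha mul1r.
Qed.

Lemma lead_prop (Sig : 'M[R]_n) S1 S2 a b : leading_pair Sig S1 S2 a b ->
  [/\ norm2 a = 1, norm2 b = 1, mask S1 a = a, mask S2 b = b &
   forall z w, norm2 z <= 1 -> norm2 w <= 1 ->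
     form Sig (mask S1 z) (mask S2 w) <= form Sig a b].
Proof.
case=> [[ha hb sa sb] [hB1 hB2]].
have ma := mask_id sa; have mb := mask_id sb.
split => // z w hz hw.
have -> : form Sig a b = specnorm (restr S1 S2 Sig).
  rewrite -{1}ma -{1}mb -form_restr /form hB1 dotvZr -norm2_sqr ha.
  by rewrite expr1n mulr1.
rewrite -form_restr; apply: le_trans (ler_norm _) _; exact: form_le_spec.
Qed.

Definition ev (i : 'I_n) : 'cV[R]_n := delta_mx i 0.

Lemma dotv_delta i w : dotv (ev i) w = w i 0.
Proof.
rewrite /dotv (bigD1 i) //= big1 ?addr0 => [|j hj]; first by rewrite mxE !eqxx mul1r.
by rewrite mxE (negbTE hj) mul0r.
Qed.

Lemma norm2_delta i : norm2 (ev i) = 1.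
Proof. by rewrite /norm2 dotv_delta mxE !eqxx sqrtr1. Qed.

Lemma mul_delta (M : 'M[R]_n) j i : (M *m ev j) i 0 = M i j.
Proof.
rewrite mxE (bigD1 j) //= big1 ?addr0 => [|k hk]; first by rewrite mxE !eqxx mulr1.
by rewrite mxE (negbTE hk) mulr0.
Qed.

Lemma form_delta (M : 'M[R]_n) i j : form M (ev i) (ev j) = M i j.
Proof. by rewrite /form dotv_delta mul_delta. Qed.

Lemma mask_delta i : mask [set i] (ev i) = ev i .
Proof.
rewrite /ev; apply/matrixP => k l; rewrite !mxE inE; case: eqP => // hk.
by rewrite (ord1 l); case: eqP => // hh; case: hk.
Qed.

End Vec.

Lemma step_num (R : realFieldType) (rho eta X Y x y bb bb' X' x' : R) :
 0 < rho -> 0 <= eta -> eta <= 1/64 -> 0 < X -> 0 < Y -> X/2 <= x -> Y/2 <= y ->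
 bb <= x -> 0 <= bb -> 0 <= bb' ->
 rho*(x*y) - 2*(eta*rho*X*Y) <= rho*(bb*bb') ->
 rho*bb'*X' - 2*(eta*rho*X*Y) <= rho*bb'*x' ->
 X' - 5*eta*X <= x'.
Proof.
move=> hr he he1 hX hY hx hy hbb hb0 hb'0 h1 h2.
have h1' : x*y - 2*(eta*X*Y) <= bb*bb'.
  rewrite -(ler_pM2l hr); lra.
have h2' : bb'*X' - 2*(eta*X*Y) <= bb'*x'.
  rewrite -(ler_pM2l hr); lra.
have h3 : bb * bb' <= x * bb' by apply: ler_wpM2r.
have h4 : eta * X * Y <= 2 * eta * x * Y.
  have : eta * Y * X <= eta * Y * (2 * x) by apply: ler_wpM2l; [apply: mulr_ge0; lra | lra].
  lra.
have h5 : x * (y - 4 * eta * Y) <= x * bb'.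
  have : x * (y - 4 * eta * Y) = x*y - 2 * (2 * eta * x * Y) by ring.
  lra.
have xpos : 0 < x by lra.
have h6 : y - 4 * eta * Y <= bb' by rewrite -(ler_pM2l xpos).
have h7 : 7/16 * Y <= bb'.
  have : eta * Y <= 1/64 * Y by apply: ler_wpM2r; lra.
  lra.
have bpos : 0 < bb' by lra.
have h8 : 0 <= bb' * (x' - X' + 5 * eta * X).
  have : eta * X * (7/16 * Y) <= eta * X * bb' by apply: ler_wpM2l; [apply: mulr_ge0; lra | lra].
  have : 0 <= eta * X * Y by apply: mulr_ge0; [apply: mulr_ge0|]; lra.
  lra.
have : 0 <= x' - X' + 5 * eta * X.
  by rewrite -(pmulr_rge0 _ bpos).
lra.
Qed.

Lemma base_num (R : realFieldType) (rho eta X Y x y : R) :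
 0 < rho -> 0 <= eta -> eta <= 1/64 -> 0 < X -> 0 < Y -> 0 <= x -> 0 <= y -> x <= X -> y <= Y ->
 rho*(X*Y) - eta*rho*X*Y <= rho*(x*y) + eta*rho*X*Y ->
 X/2 <= x /\ Y/2 <= y.
Proof.
move=> hr he he1 hX hY hx hy hxX hyY h.
have h' : X*Y - 2*(eta*X*Y) <= x*y.
  rewrite -(ler_pM2l hr); lra.
have hXY : 0 < X * Y by apply: mulr_gt0.
have h2 : 31/32 * (X * Y) <= x * y.
  have : eta * (X*Y) <= 1/64 * (X*Y) by apply: ler_wpM2r; lra.
  lra.
split.
  have : x * y <= x * Y by apply: ler_wpM2l.
  move=> hh; have : 0 <= (x - 31/32 * X) * Y by lra.
  rewrite pmulr_lge0 //; lra.
have : x * y <= X * y by apply: ler_wpM2r.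
move=> hh; have : 0 <= (y - 31/32 * Y) * X by lra.
rewrite pmulr_lge0 //; lra.
Qed.

Lemma sq_le_f (R : realFieldType) (x y : R) : 0 <= y -> x ^+ 2 <= y ^+ 2 -> x <= y.
Proof. move=> hy h; case: (lerP x y) => // hxy; nra. Qed.

Lemma final_num (R : realFieldType) (eta s x y bb bb' : R) :
  0 <= eta -> 12 * eta <= 1 - s -> eta <= 1/64 -> 1 - 5*eta <= x -> 1 - 5*eta <= y ->
  0 <= bb -> bb <= 1 -> 0 <= bb' -> bb' <= 1 -> x * y - 2 * eta <= bb * bb' ->
  s <= bb /\ s <= bb'.
Proof.
move=> he hs he1 hx hy hb0 hb1 hb'0 hb'1 h.
have h0 : 0 <= 1 - 5 * eta by lra.
have hxy : (1 - 5*eta) * (1 - 5*eta) <= x * y by apply: ler_pM.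
have h1 : bb * bb' <= bb by rewrite -[X in _ <= X]mulr1; apply: ler_wpM2l.
have h2 : bb * bb' <= bb' by rewrite -[X in _ <= X]mul1r; apply: ler_wpM2r.
have h3 : 1 - 10 * eta <= (1 - 5*eta) * (1 - 5*eta).
  have : 0 <= 25 * (eta * eta) by apply: mulr_ge0 => //; apply: mulr_ge0.
  move=> hh; have -> : (1 - 5*eta) * (1 - 5*eta) = 1 - 10 * eta + 25 * (eta * eta) by ring.
  lra.
split; lra.
Qed.

Lemma noise_num (R : rcfType) (CE c' C rho gamma L m P s X Y : R) :
  0 < CE -> 0 < c' -> 0 < rho -> 0 < gamma -> gamma < 1 -> 0 <= L -> 0 < m ->
  1 <= P -> 0 <= s -> s <= 2 * P -> 0 < X -> 0 < Y ->
  C = 4096 * CE ^+ 2 * (2 + c') ->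
  C * (1 + rho) ^+ 2 / (rho ^+ 2 * gamma ^+ 2 * (1 - Num.sqrt gamma) ^+ 2)
    * (P * (X ^+ 2)^-1 * (Y ^+ 2)^-1) * L <= m ->
  CE * Num.sqrt ((s * L + c' * L) / m) <=
    gamma * (1 - Num.sqrt gamma) / 64 * rho * X * Y.
Proof.
move=> hCE hc hr hg hg1 hL hm hP hs0 hs hX hY hC hyp.
set g := Num.sqrt gamma.
have g0 : 0 < g by rewrite sqrtr_gt0.
have g1 : g < 1 by rewrite -sqrtr1 ltr_sqrt.
set eta := gamma * (1 - g) / 64.
have K0 : 0 < 1 - g by lra.
have RHS0 : 0 <= eta * rho * X * Y.
  apply: mulr_ge0; last lra. apply: mulr_ge0; last lra. apply: mulr_ge0; last lra.
  rewrite /eta; apply: mulr_ge0; last lra; apply: mulr_ge0; lra.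
have Q0 : 0 <= (s * L + c' * L) / m.
  apply: divr_ge0; last lra; apply: addr_ge0; apply: mulr_ge0; lra.
have key : CE ^+ 2 * (s * L + c' * L) <= m * (eta * rho * X * Y) ^+ 2.
  have step_a := ler_wpM2r (sqr_ge0 (eta * rho * X * Y)) hyp.
  apply: le_trans step_a.
  have -> : C * (1 + rho) ^+ 2 / (rho ^+ 2 * gamma ^+ 2 * (1 - g) ^+ 2)
    * (P * (X ^+ 2)^-1 * (Y ^+ 2)^-1) * L * (eta * rho * X * Y) ^+ 2
    = CE ^+ 2 * (2 + c') * (1 + rho) ^+ 2 * P * L.
    rewrite hC /eta; field.
    apply/and5P; split; apply/eqP; lra.
  have hPL : 0 <= P * L by apply: mulr_ge0; lra.
  have hCE2 : 0 < CE ^+ 2 by apply: exprn_gt0.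
  have h1 : (s * L + c' * L) <= (2 + c') * (P * L).
    have : s * L <= 2 * P * L by apply: ler_wpM2r.
    have : c' * L <= c' * P * L.
      rewrite -mulrA; apply: ler_wpM2l; first lra.
      rewrite -[X in X <= _]mul1r; apply: ler_wpM2r; lra.
    lra.
  have hr2 : 1 <= (1 + rho) ^+ 2 by rewrite expr2; nra.
  have h2 := ler_wpM2l (_ : 0 <= (2 + c') * (P * L)) hr2.
  have h3 : 0 <= (2 + c') * (P * L) by apply: mulr_ge0; lra.
  have h4 := h2 h3; rewrite mulr1 in h4.
  have h5 := le_trans h1 h4.
  have h6 := ler_wpM2l (ltW hCE2) h5.
  have E : CE ^+ 2 * ((2 + c') * (P * L) * (1 + rho) ^+ 2) =
    CE ^+ 2 * (2 + c') * (1 + rho) ^+ 2 * P * L by ring.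
  by rewrite -E.
apply: sq_le_f => //.
rewrite exprMn sqr_sqrtr //.
rewrite mulrA ler_pdivrMr //; lra.
Qed.

Lemma inv_num (R : realFieldType) (eta X X' x : R) :
  0 <= eta -> eta <= 1/64 -> 0 <= X -> X <= X' -> X' - 5 * eta * X <= x -> X' / 2 <= x.
Proof.
move=> he he1 hX hXX h.
have : eta * X <= 1/64 * X' by apply: ler_pM => //; lra.
lra.
Qed.

Lemma final_pre (R : realFieldType) (rho eta X Y x y b b' : R) :
  0 < rho -> 0 <= eta -> 0 <= X -> X <= 1 -> 0 <= Y -> Y <= 1 ->
  rho * (x * y) - 2 * (eta * rho * X * Y) <= rho * (b * b') -> x * y - 2 * eta <= b * b'.
Proof.
move=> hr he hX hX1 hY hY1 h.
have hXY : X * Y <= 1 by rewrite -(mulr1 1); apply: ler_pM.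
have : eta * (X * Y) <= eta by rewrite -[X in _ <= X]mulr1; apply: ler_wpM2l.
move=> h2.
have : rho * (x * y - 2 * eta) <= rho * (b * b').
  have : rho * (eta * (X * Y)) <= rho * eta by apply: ler_wpM2l; lra.
  lra.
by rewrite ler_pM2l.
Qed.

Lemma nA1 t ku : (1 <= ku)%N -> (0 < minn (maxn t 1) ku)%N.
Proof. lia. Qed.
Lemma nA2 t t' ku : (t <= t')%N -> (minn (maxn t 1) ku <= minn (maxn t' 1) ku)%N.
Proof. lia. Qed.
Lemma nA3 ku n : (1 <= ku)%N -> (0 < n)%N -> 1%N = minn (minn (maxn 0 1) ku) n.
Proof. lia. Qed.
Lemma nA4 t ku n : minn (minn t.+1 ku) n = minn (minn (maxn t.+1 1) ku) n.
Proof. lia. Qed.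
Lemma nA5 t ku kv : (1 <= ku)%N -> (1 <= minn (maxn t 1) ku + minn (maxn t 1) kv)%N.
Proof. lia. Qed.
Lemma nA6 t ku kv : (t <= maxn ku kv)%N -> (1 <= ku)%N -> (1 <= maxn t 1 < (maxn ku kv).+1)%N.
Proof. lia. Qed.
Lemma nsz0 a b t ku kv n : (1 <= ku)%N -> (1 <= kv)%N ->
  (a <= minn (minn (maxn t 1) ku) n)%N -> (b <= minn (minn (maxn t 1) kv) n)%N ->
  [/\ (a <= ku)%N, (b <= kv)%N & (a + b <= 2 * (minn (maxn t 1) ku + minn (maxn t 1) kv))%N].
Proof. move=> *; split; lia. Qed.
Lemma nsz1 a b t ku kv n : (1 <= ku)%N -> (1 <= kv)%N ->
  (a <= minn (minn (maxn t.+1 1) ku) n)%N -> (b <= minn (minn (maxn t.+1 1) kv) n)%N ->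
  [/\ (a <= ku)%N, (b <= kv)%N & (a + b <= 2 * (minn (maxn t 1) ku + minn (maxn t 1) kv))%N].
Proof. move=> *; split; lia. Qed.
Lemma nmono t ku n : (minn (minn (maxn t 1) ku) n <= minn (minn (maxn t.+1 1) ku) n)%N.
Proof. lia. Qed.
Lemma nfin a ku kv n : (a <= ku)%N -> (a <= n)%N -> (a <= minn (minn (maxn (maxn ku kv) 1) ku) n)%N.
Proof. lia. Qed.
Lemma nk ku kv : (1 <= ku)%N -> exists k, maxn ku kv = k.+1.
Proof. by move=> h; exists (maxn ku kv).-1; lia. Qed.
Lemma n1le ku n : (1 <= ku)%N -> (0 < n)%N -> (1 <= minn (minn (maxn 0 1) ku) n)%N.
Proof. lia. Qed.
Lemma nA7 t ku kv : (1 <= ku)%N -> (1 + 1 <= 2 * (minn (maxn t 1) ku + minn (maxn t 1) kv))%N.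
Proof. lia. Qed.
Lemma nfin' a ku kv n : (a <= kv)%N -> (a <= n)%N -> (a <= minn (minn (maxn (maxn ku kv) 1) kv) n)%N.
Proof. lia. Qed.

Lemma eta_facts (R : realFieldType) (g s : R) : 0 < g -> g < 1 -> 0 < s -> s < 1 ->
  [/\ 0 <= g * (1 - s) / 64, g * (1 - s) / 64 <= 1/64 & 12 * (g * (1 - s) / 64) <= 1 - s].
Proof.
move=> g0 g1 s0 s1.
have h1 : g * (1 - s) <= 1 * 1 by apply: ler_pM; lra.
have h2 : g * (1 - s) <= 1 * (1 - s) by apply: ler_wpM2r; lra.
have h3 : 0 <= g * (1 - s) by apply: mulr_ge0; lra.
split; lra.
Qed.

Lemma posC (R : realFieldType) (CE c' : R) : 0 < CE -> 0 < c' -> 0 < 4096 * CE ^+ 2 * (2 + c').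
Proof.
move=> h1 h2; apply: mulr_gt0; last lra.
by apply: mulr_gt0; [lra | apply: exprn_gt0].
Qed.

Lemma chain (R : realFieldType) (a b c d w1 w2 e : R) :
  a <= b + w1 -> w1 <= e -> b <= c -> c <= d + w2 -> w2 <= e -> a - e <= d + e.
Proof. lra. Qed.

Lemma fx_num (R : realFieldType) (eta X x : R) :
  0 <= eta -> X <= 1 -> 1 - 5 * eta * X <= x -> 1 - 5 * eta <= x.
Proof.
move=> he hX h.
have : eta * X <= eta * 1 by apply: ler_wpM2l.
lra.
Qed.

Lemma C2_ge0 (R : realFieldType) (C rho gamma : R) : 0 < C -> 0 < rho -> 0 < gamma ->
  0 <= C * (1 + rho) / (rho * gamma).
Proof.
move=> h1 h2 h3; apply: divr_ge0; last by apply: mulr_ge0; lra.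
apply: mulr_ge0; lra.
Qed.

Lemma C1_ge0 (R : realFieldType) (C rho gamma s : R) : 0 < C ->
  0 <= C * (1 + rho) ^+ 2 / (rho ^+ 2 * gamma ^+ 2 * (1 - s) ^+ 2).
Proof.
move=> h1; apply: divr_ge0.
  apply: mulr_ge0; [lra | exact: sqr_ge0].
by apply: mulr_ge0; [apply: mulr_ge0|]; apply: sqr_ge0.
Qed.

Lemma sub_le (R : realFieldType) (g d : R) : g <= d -> 1 - d <= 1 - g.
Proof. lra. Qed.

Lemma swap_pair (R : realFieldType) (rho eta X Y x y b b' : R) :
  rho*(x*y) - 2*(eta*rho*X*Y) <= rho*(b*b') -> rho*(y*x) - 2*(eta*rho*Y*X) <= rho*(b'*b).
Proof.
have -> : eta*rho*Y*X = eta*rho*X*Y by ring.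
by rewrite (mulrC y) (mulrC b').
Qed.

Lemma swap_e (R : realFieldType) (rho eta X Y a c : R) :
  a - 2*(eta*rho*X*Y) <= c -> a - 2*(eta*rho*Y*X) <= c.
Proof. by have -> : eta*rho*Y*X = eta*rho*X*Y by ring. Qed.


Unset Implicit Arguments.
Unset Strict Implicit.

Theorem theorem1 (R : realType) (CE c' : R) (hCE : 0 < CE) (hc' : 0 < c') :
  exists C : R, 0 < C /\
  forall (n m : nat) (x y : 'I_m -> 'cV[R]_n) (rho : R) (u v : 'cV[R]_n)
         (ku kv : nat) (gamma : R)
         (Su Sv : nat -> {set 'I_n}) (uh vh : nat -> 'cV[R]_n),
    (0 < n)%N -> (0 < m)%N ->
    0 < rho -> rho < 1 ->
    norm2 u = 1 -> norm2 v = 1 ->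
    (l0 u <= ku)%N -> (l0 v <= kv)%N ->
    0 < gamma -> gamma < 1 ->
    let Sig := sample_cov x y in
    let W := Sig - rho *: (u *m v^T) in
    event_E CE c' m ku kv W ->
    let kmax := maxn ku kv in
    let C1 := C * (1 + rho) ^+ 2
                / (rho ^+ 2 * gamma ^+ 2 * (1 - Num.sqrt gamma) ^+ 2) in
    let C2 := C * (1 + rho) / (rho * gamma) in
    m%:R >= C1 * (\big[Num.max/0]_(1 <= t < kmax.+1)
                    ((minn t ku + minn t kv)%:R
                     * sfun u (minn t ku) * sfun v (minn t kv)))
              * ln n%:R ->
    bisep_run Sig ku kv Su Sv uh vh ->
    sin_angle (uh kmax) u <=
      Num.sqrt (1 - gamma) + C2 * Num.sqrt ((ku + kv)%:R * ln n%:R / m%:R) /\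
    sin_angle (vh kmax) v <=
      Num.sqrt (1 - gamma) + C2 * Num.sqrt ((ku + kv)%:R * ln n%:R / m%:R).
Proof.
exists (4096 * CE ^+ 2 * (2 + c')); split.
  by apply: posC.
move=> n m x y rho u v ku kv gamma Su Sv uh vh hn hm hr0 hr1 hu hv hku hkv hg0 hg1.
move=> Sig W hE kmax C1 C2 hM hrun.
have hSig : Sig = W + rho *: (u *m v^T) by rewrite /W subrK.
have hSigT : Sig^T = W^T + rho *: (v *m u^T).
  by rewrite hSig linearD /= linearZ /= trmx_mul trmxK.

have supp_ne : forall a : 'cV[R]_n, norm2 a = 1 -> (0 < l0 a)%N.
  move=> a ha; rewrite /l0 card_gt0; apply/negP => /eqP h0.
  suff : (0:R) < 0 by rewrite ltxx.
  apply: (pos_of_sq ha) => j.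
  have : j \notin supp a by rewrite h0 inE.
  by rewrite inE negbK => /eqP ->; rewrite expr0n.
have ku1 : (1 <= ku)%N := leq_trans (supp_ne u hu) hku.
have kv1 : (1 <= kv)%N := leq_trans (supp_ne v hv) hkv.
have kmaxE : kmax = maxn ku kv by [].
have L0 : 0 <= ln (n%:R : R) by apply: ln_ge0; rewrite ler1n.
set sg := Num.sqrt gamma.
have sg0 : 0 < sg by rewrite sqrtr_gt0.
have sg1 : sg < 1 by rewrite -sqrtr1 ltr_sqrt.
set eta := gamma * (1 - sg) / 64.
have [eta0 eta1 eta12] : [/\ 0 <= eta, eta <= 1/64 & 12 * eta <= 1 - sg] :=
  eta_facts hg0 hg1 sg0 sg1.
pose pu t := minn (maxn t 1) ku.
pose qv t := minn (maxn t 1) kv.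
pose X t := norm2 (mask (topset u (pu t)) u).
pose Y t := norm2 (mask (topset v (qv t)) v).
pose xx t := norm2 (mask (Su t) u).
pose yy t := norm2 (mask (Sv t) v).
have Xpos : forall t, 0 < X t.
  move=> t; have h1 : (0 < pu t)%N by exact: nA1.
  have := pos_of_sq hu (fun j => topset_max u j h1).
  rewrite -norm2_mask_sqr -/(X t) => h.
  by rewrite lt_def norm2_ge0 andbT; apply/eqP => h0; move: h; rewrite h0 expr0n ltxx.
have Ypos : forall t, 0 < Y t.
  move=> t; have h1 : (0 < qv t)%N by exact: nA1.
  have := pos_of_sq hv (fun j => topset_max v j h1).
  rewrite -norm2_mask_sqr -/(Y t) => h.
  by rewrite lt_def norm2_ge0 andbT; apply/eqP => h0; move: h; rewrite h0 expr0n ltxx.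
have X1 : forall t, X t <= 1 by move=> t; rewrite -hu; apply: norm2_mask_le.
have Y1 : forall t, Y t <= 1 by move=> t; rewrite -hv; apply: norm2_mask_le.
have Xmono : forall t t', (t <= t')%N -> X t <= X t'.
  by move=> t t' h; apply: norm2_mask_sub; apply: topset_sub; exact: nA2.
have Ymono : forall t t', (t <= t')%N -> Y t <= Y t'.
  by move=> t t' h; apply: norm2_mask_sub; apply: topset_sub; exact: nA2.
have cardSu : forall t, (t <= kmax)%N -> #|Su t| = minn (pu t) n.
  case=> [|t] ht.
    case: hrun => [[i0 [j0 [_ [-> _]]]] _ _]; rewrite cards1; exact: nA3.
  case: hrun => [_ hstep _]; case: (hstep t ht) => _ [hc _] _.
  by rewrite hc; exact: nA4.
have cardSv : forall t, (t <= kmax)%N -> #|Sv t| = minn (qv t) n.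
  case=> [|t] ht.
    case: hrun => [[i0 [j0 [_ [_ ->]]]] _ _]; rewrite cards1; exact: nA3.
  case: hrun => [_ hstep _]; case: (hstep t ht) => _ _ [hc _].
  by rewrite hc; exact: nA4.

have C1ge0 : 0 <= C1 by apply: C1_ge0; apply: posC.
have hnoise : forall t, (t <= kmax)%N -> forall S1 S2 : {set 'I_n},
    (#|S1| <= ku)%N -> (#|S2| <= kv)%N -> (#|S1| + #|S2| <= 2 * (pu t + qv t))%N ->
    specnorm (restr S1 S2 W) <= eta * rho * X t * Y t.
  move=> t ht S1 S2 h1 h2 h12.
  apply: le_trans (hE S1 S2 h1 h2) _.
  apply: (noise_num (C := 4096 * CE ^+ 2 * (2 + c')) (P := (pu t + qv t)%:R)) => //.
  - by rewrite ltr0n.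
  - by rewrite ler1n; apply: nA5.
  - by rewrite -natrM ler_nat.
  apply: le_trans hM.
  apply: ler_wpM2r => //; apply: ler_wpM2l => //.
  have -> : (pu t + qv t)%:R * (X t ^+ 2)^-1 * (Y t ^+ 2)^-1 =
     (fun t => (minn t ku + minn t kv)%:R * sfun u (minn t ku) * sfun v (minn t kv)) (maxn t 1).
    by rewrite /= !sfunE -!norm2_mask_sqr.
  rewrite big_nat_cond.
  apply: (@le_bigmax_seq _ _ nat (index_iota 1 kmax.+1) 0 (maxn t 1)).
    by rewrite mem_index_iota; apply: nA6.
  by rewrite /= andbT; rewrite -mem_index_iota; rewrite mem_index_iota; apply: nA6.

have SigE : forall i j, Sig i j = W i j + rho * (u i 0 * v j 0).
  by move=> i j; rewrite hSig !mxE big_ord1 !mxE.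
have Wentry : forall t, (t <= kmax)%N -> forall i j, `|W i j| <= eta * rho * X t * Y t.
  move=> t ht i j.
  have hs : specnorm (restr [set i] [set j] W) <= eta * rho * X t * Y t.
    by apply: hnoise => //; rewrite !cards1 //; apply: nA7.
  have := @noise_spec _ _ _ _ _ _ hs (@ev R n i) (@ev R n j); rewrite !mask_delta form_delta !norm2_delta.
  by apply.
have inv0 : X 0 / 2 <= xx 0 /\ Y 0 / 2 <= yy 0.
  case: hrun => [[i0 [j0 [hmax [hS0 hT0]]]] _ _].
  rewrite /xx /yy hS0 hT0 !norm2_mask1.
  have /cards1P [h hh] : #|topset u (pu 0)| == 1%N.
    by rewrite card_topset -nA3.
  have /cards1P [h' hh'] : #|topset v (qv 0)| == 1%N.
    by rewrite card_topset -nA3.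
  have X0E : X 0 = `|u h 0| by rewrite /X hh norm2_mask1.
  have Y0E : Y 0 = `|v h' 0| by rewrite /Y hh' norm2_mask1.
  have xle : `|u i0 0| <= X 0.
    apply: sq_le; first exact: norm2_ge0.
    rewrite real_normK ?num_real // /X norm2_mask_sqr; apply: topset_max; exact: nA1.
  have yle : `|v j0 0| <= Y 0.
    apply: sq_le; first exact: norm2_ge0.
    rewrite real_normK ?num_real // /Y norm2_mask_sqr; apply: topset_max; exact: nA1.
  have w1 := Wentry 0%N (leq0n _) h h'.
  have w2 := Wentry 0%N (leq0n _) i0 j0.
  have m1 := hmax h h'.
  have a1 : rho * (X 0 * Y 0) <= `|Sig h h'| + `|W h h'|.
    have -> : rho * (X 0 * Y 0) = `|Sig h h' - W h h'|.
      by rewrite SigE addrAC subrr add0r X0E Y0E normrM (gtr0_norm hr0) normrM.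
    exact: ler_normB.
  have a2 : `|Sig i0 j0| <= rho * (`|u i0 0| * `|v j0 0|) + `|W i0 j0|.
    rewrite SigE addrC; apply: le_trans (ler_normD _ _) _.
    by rewrite normrM (gtr0_norm hr0) normrM.
  apply: (base_num hr0 eta0 eta1 (Xpos 0%N) (Ypos 0%N)) => //.
  exact: (chain a1 w1 m1 a2 w2).

have step : forall t, (t < kmax)%N -> X t / 2 <= xx t -> Y t / 2 <= yy t ->
   (forall T : {set 'I_n}, (#|T| <= #|Su t.+1|)%N -> norm2 (mask T u) - 5 * eta * X t <= xx t.+1) /\
   (forall T : {set 'I_n}, (#|T| <= #|Sv t.+1|)%N -> norm2 (mask T v) - 5 * eta * Y t <= yy t.+1).
  move=> t ht hx hy.
  case: hrun => _ hstep _; case: (hstep t ht) => hlp htopu htopv.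
  case: (lead_prop hlp) => ha hb ma mb hlead.
  have cu := cardSu t (ltnW ht); have cv := cardSv t (ltnW ht).
  have cu1 := cardSu t.+1 ht; have cv1 := cardSv t.+1 ht.
  have hN : forall S1 S2 : {set 'I_n},
      (#|S1| <= ku)%N -> (#|S2| <= kv)%N -> (#|S1| + #|S2| <= 2 * (pu t + qv t))%N ->
      noise W S1 S2 (eta * rho * X t * Y t).
    by move=> S1 S2 h1 h2 h3; apply: noise_spec; apply: hnoise => //; apply: ltnW.
  have hN' : forall S1 S2 : {set 'I_n},
      (#|S1| <= minn (minn (maxn t.+1 1) ku) n)%N -> (#|S2| <= minn (minn (maxn t.+1 1) kv) n)%N ->
      noise W S1 S2 (eta * rho * X t * Y t).
    by move=> S1 S2 h1 h2; case: (nsz1 ku1 kv1 h1 h2) => h1' h2' h3'; apply: hN.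
  have bu : (#|Su t| <= minn (minn (maxn t.+1 1) ku) n)%N by rewrite cu; exact: nmono.
  have bv : (#|Sv t| <= minn (minn (maxn t.+1 1) kv) n)%N by rewrite cv; exact: nmono.
  have bu1 : (#|Su t.+1| <= minn (minn (maxn t.+1 1) ku) n)%N by rewrite cu1.
  have bv1 : (#|Sv t.+1| <= minn (minn (maxn t.+1 1) kv) n)%N by rewrite cv1.
  have N0 : noise W (Su t) (Sv t) (eta * rho * X t * Y t).
    exact: hN'.
  rewrite hSig in hlead.
  have pair := pair_bound hr0 ha hb ma mb hlead N0.
  have bbx : `|dotv (uh t) u| <= xx t := dot_mask_le u ma ha.
  have bby : `|dotv v (vh t)| <= yy t by rewrite dotvC; exact: dot_mask_le v mb hb.
  split.
  - move=> T hT.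
    have NS : noise W (Su t.+1) (Sv t) (eta * rho * X t * Y t).
      exact: hN'.
    have NT : noise W T (Sv t) (eta * rho * X t * Y t).
      by apply: hN' => //; apply: leq_trans hT bu1.
    rewrite hSig in htopu.
    have sel := select_bound hr0 hb mb htopu hT NS NT.
    exact: (step_num hr0 eta0 eta1 (Xpos t) (Ypos t) hx hy bbx (normr_ge0 _) (normr_ge0 _) pair sel).
  - move=> T hT.
    have NS : noise W^T (Sv t.+1) (Su t) (eta * rho * X t * Y t).
      by apply: noise_tr; apply: hN'.
    have NT : noise W^T T (Su t) (eta * rho * X t * Y t).
      by apply: noise_tr; apply: hN' => //; apply: leq_trans hT bv1.
    rewrite hSigT in htopv.
    have sel := select_bound hr0 ha ma htopv hT NS NT.
    rewrite (dotvC u) in sel.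
    have pair' := swap_pair pair.
    have sel' := swap_e sel.
    exact: (step_num hr0 eta0 eta1 (Ypos t) (Xpos t) hy hx bby (normr_ge0 _) (normr_ge0 _) pair' sel').
have inv : forall t, (t <= kmax)%N -> X t / 2 <= xx t /\ Y t / 2 <= yy t.
  elim=> [|t IH] ht; first exact: inv0.
  have [hx hy] := IH (ltnW ht).
  have [s1 s2] := step t ht hx hy.
  split.
    have := s1 (topset u (pu t.+1)); rewrite card_topset cardSu // leqnn => /(_ isT).
    apply: inv_num => //; [exact: ltW (Xpos t) | exact: Xmono].
  have := s2 (topset v (qv t.+1)); rewrite card_topset cardSv // leqnn => /(_ isT).
  apply: inv_num => //; [exact: ltW (Ypos t) | exact: Ymono].

have [k kE] : exists k, kmax = k.+1 by apply: nk.
have hk : (k < kmax)%N by rewrite kE.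
have [hx hy] := inv k (ltnW hk).
have [s1 s2] := step k hk hx hy.
have cuf := cardSu kmax (leqnn _); have cvf := cardSv kmax (leqnn _).
have fx : 1 - 5 * eta <= xx kmax.
  have := s1 (supp u); rewrite -kE mask_id ?subxx // hu.
  have hcard : (#|supp u| <= #|Su kmax|)%N.
    rewrite cuf; apply: nfin; first exact: hku.
    by apply: leq_trans (max_card _) _; rewrite card_ord.
  move=> /(_ hcard) h.
  exact: (fx_num eta0 (X1 k) h).
have fy : 1 - 5 * eta <= yy kmax.
  have := s2 (supp v); rewrite -kE mask_id ?subxx // hv.
  have hcard : (#|supp v| <= #|Sv kmax|)%N.
    rewrite cvf; apply: nfin'; first exact: hkv.
    by apply: leq_trans (max_card _) _; rewrite card_ord.
  move=> /(_ hcard) h.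
  exact: (fx_num eta0 (Y1 k) h).
case: hrun => _ _ hlp.
case: (lead_prop hlp) => ha hb ma mb hlead.
have N0 : noise W (Su kmax) (Sv kmax) (eta * rho * X kmax * Y kmax).
  have h1 : (#|Su kmax| <= minn (minn (maxn kmax 1) ku) n)%N by rewrite cuf.
  have h2 : (#|Sv kmax| <= minn (minn (maxn kmax 1) kv) n)%N by rewrite cvf.
  case: (nsz0 ku1 kv1 h1 h2) => h1' h2' h3'.
  by apply: noise_spec; apply: hnoise.
rewrite hSig in hlead.
have pair := pair_bound hr0 ha hb ma mb hlead N0.
have bbx : `|dotv (uh kmax) u| <= xx kmax := dot_mask_le u ma ha.
have bby : `|dotv v (vh kmax)| <= yy kmax by rewrite dotvC; exact: dot_mask_le v mb hb.
have xx1 : xx kmax <= 1 by rewrite -hu; apply: norm2_mask_le.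
have yy1 : yy kmax <= 1 by rewrite -hv; apply: norm2_mask_le.
have pre := final_pre hr0 eta0 (ltW (Xpos kmax)) (X1 kmax) (ltW (Ypos kmax)) (Y1 kmax) pair.
have [f1 f2] := final_num eta0 eta12 eta1 fx fy (normr_ge0 _) (le_trans bbx xx1)
   (normr_ge0 _) (le_trans bby yy1) pre.
have C2ge0 : 0 <= C2.
  by apply: C2_ge0 => //; apply: posC.
have sq0 : 0 <= C2 * Num.sqrt ((ku + kv)%:R * ln (n%:R : R) / m%:R).
  by apply: mulr_ge0 => //; apply: sqrtr_ge0.
have fin : forall d : R, sg <= `|d| -> Num.sqrt (1 - d ^+ 2) <=
    Num.sqrt (1 - gamma) + C2 * Num.sqrt ((ku + kv)%:R * ln (n%:R : R) / m%:R).
  move=> d hd.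
  have hsq : gamma <= d ^+ 2.
    rewrite -(real_normK (num_real d)) -(sqr_sqrtr (ltW hg0)) -/sg !expr2.
    by apply: ler_pM => //; exact: ltW.
  apply: le_trans (_ : Num.sqrt (1 - gamma) <= _); last by rewrite lerDl.
  by rewrite ler_sqrt ?subr_ge0 ?(ltW hg1) //; apply: sub_le.
split.
  by rewrite /sin_angle; apply: fin.
by rewrite /sin_angle dotvC; apply: fin.
Qed.
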